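(* Let $1\le m\le N$, $a\in V$ and $b\in\wedge^m(V)$. Then $\partial(\mathbf{x})b\in\mathcal{P}_1\otimes\wedge^{m-1}(V)$ and $$\sum_{i=1}^Na_i\mathcal{D}_i\,\partial(\mathbf{x})b=(1+\gamma\kappa)\,\partial(a)b,$$ where the $\mathcal{D}_i$ are the Dunkl operators on $\mathcal{P}\otimes\wedge^{m-1}(V)$. In particular $\partial(\mathbf{x})b$ is singular for $\kappa=-1/\gamma$, i.e. $\mathcal{D}_i\partial(\mathbf{x})b=0$ for all $1\le i\le N$ when $\kappa=-1/\gamma$.
   Context: $R\subset\mathbb{R}^N$ is a reduced root system with $\operatorname{span}_{\mathbb{R}}R=\mathbb{R}^N$, $|v|^2=2$ for all $v\in R$, positive roots $R_+$; $W$ is the reflection group generated by $\sigma_v\colon x\mapsto x-\langle x,v\rangle v$, assumed to have one conjugacy class of reflections, so its reflection representation $\tau$ on $V=\mathbb{R}^N$ is irreducible. $\gamma:=2\#R_+/N$. For $a\in V$, $\partial(a)\colon\wedge^m(V)\to\wedge^{m-1}(V)$ is the linear map $\partial(a)(b_1\wedge\cdots\wedge b_m)=\sum_{i=1}^m(-1)^{i-1}\langle a,b_i\rangle\, b_1\wedge\cdots\wedge\widehat{b_i}\wedge\cdots\wedge b_m$. With $\{u_i\}$ the standard orthonormal basis and $\mathbf{x}=\sum_i x_i\otimes u_i$, $\partial(\mathbf{x})b:=\sum_{i=1}^N x_i\otimes\partial(u_i)b$. $\tau_k$ is the representation of $W$ on $\wedge^k(V)$ induced by $\tau$; $W$ acts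 on $\mathcal{P}\otimes\wedge^k(V)$ by $w(p(x)\otimes b)=p(xw)\otimes\tau_k(w)b$, and the Dunkl operators (constant parameter $\kappa$) are $\mathcal{D}_i(p\otimes b)=\frac{\partial p}{\partial x_i}\otimes b+\kappa\sum_{v\in R_+}\frac{p(x)-p(x\sigma_v)}{\langle x,v\rangle}v_i\otimes\tau_k(\sigma_v)b$. *)

(* Defs.v *)
From HB Require Import structures.
From mathcomp Require Import all_boot all_order all_algebra all_fingroup.
From mathcomp Require Import mpoly.
From Stdlib Require Import ClassicalEpsilon.
Set Implicit Arguments. Unset Strict Implicit. Unset Printing Implicit Defensive.
Import Order.TTheory GRing.Theory Num.Theory.
Local Open Scope ring_scope.

Section Defs.
Variables (R : realFieldType) (N : nat).

Definition dotv (u v : 'rV[R]_N) : R := \sum_(i < N) u 0 i * v 0 i.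

(* reflection sigma_v : x |-> x - <x,v> v, acting on row vectors x |-> x *m refl v *)
Definition refl (v : 'rV[R]_N) : 'M[R]_N := 1%:M - v^T *m v.

Definition root_system (Rs : seq 'rV[R]_N) : Prop :=
  [/\ uniq Rs,
      (forall v, v \in Rs -> dotv v v = 2),
      (forall u v, u \in Rs -> v \in Rs -> v *m refl u \in Rs),
      (forall v (c : R), v \in Rs -> c *: v \in Rs -> c = 1 \/ c = -1) &
      (1%:M <= \sum_(v <- Rs) <<v>>)%MS ].

Definition positive_roots (Rs Rp : seq 'rV[R]_N) : Prop :=
  uniq Rp /\ exists u0 : 'rV[R]_N,
    (forall v, v \in Rs -> dotv v u0 != 0) /\
    (forall v, (v \in Rp) = (v \in Rs) && (0 < dotv v u0)).

Definition in_W (Rs : seq 'rV[R]_N) (w : 'M[R]_N) : Prop :=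
  exists s : seq 'rV[R]_N, all (mem Rs) s /\ w = \prod_(u <- s) refl u.

Definition one_refl_class (Rs : seq 'rV[R]_N) : Prop :=
  forall u v, u \in Rs -> v \in Rs ->
    exists w, in_W Rs w /\ w \in unitmx /\ refl u = invmx w *m refl v *m w.

Definition gamma (Rp : seq 'rV[R]_N) : R := (2 * size Rp)%:R / N%:R.

(* wedge^k(V) is modelled as the alternating k-tensors: coordinate functions
   b : (indices i_1..i_k) -> R with b (t o s) = sgn(s) b t.  The identification
   is b_1 /\ ... /\ b_k  <->  sum_pi sgn(pi) b_pi1 (x) ... (x) b_pik. *)
Definition idx (k : nat) := {ffun 'I_k -> 'I_N}.
Definition tens (k : nat) (A : Type) := idx k -> A.

Definition alternating (k : nat) (A : lmodType R) (b : tens k A) : Prop :=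
  forall (s : 'S_k) (t : idx k), b [ffun j => t (s j)] = ((-1) ^+ s : R) *: b t.

Definition icons (k : nat) (i : 'I_N) (t : idx k) : idx k.+1 :=
  [ffun j : 'I_k.+1 => if unlift ord0 j is Some j' then t j' else i].

Definition dpart (k : nat) (a : 'rV[R]_N) (b : tens k.+1 R) : tens k R :=
  fun t => \sum_(i < N) a 0 i * b (icons i t).

(* tau_k(w) : induced action of a matrix w on k-tensors (e_i |-> e_i w). *)
Definition tauk (k : nat) (w : 'M[R]_N) (A : lmodType R) (b : tens k A) : tens k A :=
  fun t => \sum_(t' : idx k) (\prod_(j < k) w (t' j) (t j)) *: b t'.

Definition Pol := {mpoly R[N]}.

Definition P1 (p : Pol) : bool := all [pred m | mdeg m == 1%N] (msupp p).

Definition linp (v : 'rV[R]_N) : Pol := \sum_(i < N) v 0 i *: 'X_i.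

Definition xact (w : 'M[R]_N) (p : Pol) : Pol :=
  p \mPo [tuple \sum_(j < N) w j i *: 'X_j | i < N].

(* divided difference (p(x) - p(x sigma_v)) / <x, v>, as a polynomial *)
Definition ddiff (v : 'rV[R]_N) (p : Pol) : Pol :=
  epsilon (inhabits 0) (fun q : Pol => q * linp v = p - xact (refl v) p).

Definition Dunkl (Rp : seq 'rV[R]_N) (kappa : R) (k : nat) (i : 'I_N)
    (F : tens k Pol) : tens k Pol :=
  fun t => mderiv i (F t) +
    kappa *: \sum_(v <- Rp) v 0 i *: tauk (refl v) (fun t' => ddiff v (F t')) t.

Definition dpartx (k : nat) (b : tens k.+1 R) : tens k Pol :=
  fun t => \sum_(i < N) dpart (delta_mx 0 i) b t *: 'X_i.

End Defs.

(* Main.v *)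
Require Import Defs.
From HB Require Import structures.
From mathcomp Require Import all_boot all_order all_algebra all_fingroup.
From mathcomp Require Import mpoly.
From Stdlib Require Import ClassicalEpsilon.
Set Implicit Arguments. Unset Strict Implicit. Unset Printing Implicit Defensive.
Import Order.TTheory GRing.Theory Num.Theory.
Local Open Scope ring_scope.

Section Roots.
Variables (R : realFieldType) (N : nat).
Implicit Types (u v x y : 'rV[R]_N).

Lemma dotvE u v : u *m v^T = (dotv u v)%:M.
Proof.
apply/matrixP=> i j; rewrite !ord1 !mxE /dotv; apply: eq_bigr => l _.
by rewrite !mxE.
Qed.

Lemma dotvC u v : dotv u v = dotv v u.
Proof. by apply: eq_bigr => i _; rewrite mulrC. Qed.

Lemma refl_sym v : (refl v)^T = refl v.
Proof. by rewrite /refl linearB /= tr_scalar_mx trmx_mul trmxK. Qed.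

Lemma mul_refl x v : x *m refl v = x - dotv x v *: v.
Proof.
by rewrite /refl mulmxDr mulmx1 mulmxN mulmxA dotvE mul_scalar_mx.
Qed.

Lemma refl_self v : dotv v v = 2 -> v *m refl v = - v.
Proof. by move=> h; rewrite mul_refl h scalerDl scale1r opprD addrA subrr add0r. Qed.

Lemma refl_invol v : dotv v v = 2 -> refl v *m refl v = 1%:M.
Proof.
move=> h; rewrite {1}/refl mulmxDl mul1mx mulNmx -mulmxA.
have -> : v *m refl v = - v by exact: refl_self.
by rewrite mulmxN opprK /refl addrNK.
Qed.

Lemma dotv_neq0 v : dotv v v = 2 -> v != 0.
Proof.
move=> h; apply/eqP=> v0; move: h; rewrite v0 /dotv big1 => [/eqP|i _].
  by rewrite eq_sym pnatr_eq0.
by rewrite mxE mul0r.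
Qed.

Lemma refl_anti y v : dotv v v = 2 -> y *m refl v = - y -> y = (dotv y v / 2) *: v.
Proof.
move=> h; rewrite mul_refl => e.
have e2 : y + y = dotv y v *: v by rewrite -{2}(opprK y) -e opprB addrC subrK.
have h2 : y = 2^-1 *: (y + y).
  by rewrite -mulr2n -scaler_nat scalerA mulVf ?scale1r // pnatr_eq0.
by rewrite {1}h2 e2 scalerA mulrC.
Qed.

Lemma dotvNl u v : dotv (- u) v = - dotv u v.
Proof. by rewrite /dotv -sumrN; apply: eq_bigr => i _; rewrite mxE mulNr. Qed.

Variables (Rs Rp : seq 'rV[R]_N).
Hypothesis hRs : root_system Rs.
Hypothesis hRp : positive_roots Rs Rp.

Lemma root_norm v : v \in Rs -> dotv v v = 2.
Proof. by case: hRs => _ h _ _ _; apply: h. Qed.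

Lemma neg_root v : v \in Rs -> - v \in Rs.
Proof. by case: hRs => _ _ h _ _ vR; rewrite -refl_self ?root_norm //; apply: h. Qed.

Lemma refl_root u v : u \in Rs -> v \in Rs -> v *m refl u \in Rs.
Proof. by case: hRs => _ _ h _ _; apply: h. Qed.

Lemma sum_Rs_Rp (T : zmodType) (F : 'rV[R]_N -> T) :
  (forall v, F (- v) = F v) ->
  \sum_(v <- Rs) F v = (\sum_(v <- Rp) F v) *+ 2.
Proof.
move=> FN; case: hRp => uRp [u0 [nz hp]].
have uRs : uniq Rs by case: hRs.
rewrite (bigID (fun v => 0 < dotv v u0)) /= mulr2n; congr (_ + _).
  rewrite -big_filter; apply: perm_big; apply: uniq_perm => //.
    exact: filter_uniq.
  by move=> x; rewrite mem_filter hp andbC.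
rewrite -big_filter.
rewrite (perm_big (map -%R Rp)).
  by rewrite big_map; apply: eq_bigr => v _; rewrite FN.
apply: uniq_perm; first exact: filter_uniq.
  by rewrite map_inj_uniq //; exact: oppr_inj.
move=> x; have -> : (x \in map -%R Rp) = (- x \in Rp).
  by rewrite -{1}(opprK x) (mem_map oppr_inj).
rewrite mem_filter hp dotvNl oppr_gt0 /=.
apply/andP/andP => [[px xR]|[xR px]].
  split; first by apply: neg_root.
  by rewrite lt_def leNgt px andbT; move: (nz x xR); rewrite eq_sym.
split; first by rewrite -leNgt ltW.
by rewrite -(opprK x); apply: neg_root.
Qed.


Definition MS := \sum_(v <- Rs) v^T *m v.

Lemma MS_refl u : u \in Rs -> refl u *m MS *m refl u = MS.
Proof.
move=> uR; rewrite /MS mulmx_sumr mulmx_suml.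
transitivity (\sum_(v <- map (fun v => v *m refl u) Rs) v^T *m v).
  by rewrite big_map; apply: eq_bigr => v _; rewrite trmx_mul refl_sym !mulmxA.
have hc : cancel (fun v => v *m refl u) (fun v => v *m refl u).
  by move=> v; rewrite -mulmxA refl_invol ?root_norm // mulmx1.
apply: perm_big; apply: uniq_perm.
- by rewrite (map_inj_uniq (can_inj hc)); case: hRs.
- by case: hRs.
move=> x; apply/mapP/idP => [[y yR ->]|xR]; first exact: refl_root.
by exists (x *m refl u); [exact: refl_root | rewrite hc].
Qed.

Lemma MS_comm u : u \in Rs -> refl u *m MS = MS *m refl u.
Proof.
by move=> uR; rewrite -{2}(MS_refl uR) -mulmxA refl_invol ?root_norm // mulmx1.
Qed.

Lemma W_comm w : in_W Rs w -> w *m MS = MS *m w.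
Proof.
case=> s [/allP sR ->] {w}; elim: s sR => [|u s IH] sR.
  by rewrite big_nil mul1mx mulmx1.
rewrite big_cons -mulmxE -mulmxA IH; last by move=> x xs; apply: sR; rewrite inE xs orbT.
by rewrite !mulmxA MS_comm //; apply: sR; rewrite inE eqxx.
Qed.


Hypothesis hW : one_refl_class Rs.

Lemma MS_eig : exists lam, forall u, u \in Rs -> u *m MS = lam *: u.
Proof.
case E: Rs => [|v0 rs]; first by exists 0.
have v0R : v0 \in Rs by rewrite E inE eqxx.
rewrite -E.
pose lam := dotv (v0 *m MS) v0 / 2.
have ev0 : v0 *m MS = lam *: v0.
  apply: refl_anti; first exact: root_norm.
  by rewrite -mulmxA -MS_comm // mulmxA refl_self ?root_norm // mulNmx.
exists lam => u uR.
have [w [wW [wU ew]]] := hW uR v0R.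
pose z := v0 *m w.
have zr : z *m refl u = - z.
  rewrite ew /z !mulmxA mulmxK // refl_self ?root_norm // mulNmx //.
have ez := refl_anti (root_norm uR) zr.
set c := dotv z u / 2 in ez.
have zMS : z *m MS = lam *: z by rewrite /z -mulmxA W_comm // mulmxA ev0 scalemxAl.
have zn0 : z != 0.
  apply/eqP=> z0; have := dotv_neq0 (root_norm v0R).
  by rewrite -(mulmxK wU v0) -/z z0 mul0mx eqxx.
have cn0 : c != 0 by apply: contraNneq zn0 => c0; rewrite ez c0 scale0r.
have -> : u = c^-1 *: z by rewrite ez scalerA mulVf // scale1r.
by rewrite -scalemxAl zMS !scalerA mulrC.
Qed.

Lemma MS_scalar : exists lam, MS = lam%:M.
Proof.
have [lam hl] := MS_eig; exists lam.
have : (1%:M <= kermx (MS - lam%:M))%MS.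
  case: hRs => _ _ _ _ /submx_trans; apply.
  rewrite big_seq; apply: (big_ind (fun X => (X <= kermx (MS - lam%:M))%MS)).
  - exact: sub0mx.
  - by move=> X Y hX hY; rewrite addsmx_sub hX hY.
  by move=> v vR; rewrite genmxE sub_kermx mulmxBr hl // mul_mx_scalar subrr eqxx.
by move/sub_kermxP; rewrite mul1mx => /eqP; rewrite subr_eq0 => /eqP.
Qed.


Lemma M_gamma : (0 < N)%N -> \sum_(v <- Rp) v^T *m v = (gamma Rp)%:M.
Proof.
move=> N0; have [lam hl] := MS_scalar.
set M := \sum_(v <- Rp) v^T *m v.
have e : MS = M *+ 2.
  by apply: sum_Rs_Rp => v; rewrite mulmxN -mulNmx (raddfN (@trmx _ _ _)) opprK.
have hM : M = (2^-1 * lam)%:M.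
  rewrite -scale_scalar_mx -hl e -scaler_nat scalerA mulVf ?scale1r //.
  by rewrite pnatr_eq0.
have RpRs : forall v, v \in Rp -> v \in Rs.
  by case: hRp => _ [u0 [_ hp]] v; rewrite hp => /andP[].
have tr : \tr M = 2 *+ size Rp.
  rewrite /M raddf_sum /= big_seq (eq_bigr (fun=> 2)).
    by rewrite -big_seq big_const_seq count_predT iter_addr_0.
  move=> v vR; rewrite mxtrace_mulC dotvE mxtrace_scalar root_norm //.
  exact: RpRs.
rewrite hM; congr (_%:M); move: tr; rewrite hM mxtrace_scalar /gamma => e2.
have Nn0 : (N%:R : R) != 0 by rewrite pnatr_eq0 -lt0n.
apply: (mulIf Nn0); rewrite divfK // mulr_natr e2 natrM mulr_natr.
by [].
Qed.

End Roots.
Section Tensor.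
Variables (R : realFieldType) (N : nat).

Definition upd k (t : idx N k) (j : 'I_k) (p : 'I_N) : idx N k :=
  [ffun l => if l == j then p else t l].

Lemma upd_id k (t : idx N k) j : upd t j (t j) = t.
Proof. by apply/ffunP => l; rewrite ffunE; case: eqP => // ->. Qed.

Lemma updK k (t : idx N k) j p q : upd (upd t j p) j q = upd t j q.
Proof. by apply/ffunP => l; rewrite !ffunE; case: eqP. Qed.

Lemma upd_at k (t : idx N k) j p : upd t j p j = p.
Proof. by rewrite ffunE eqxx. Qed.

Lemma sum_reindex k (X : idx N k -> R) (j0 : 'I_k) (p0 : 'I_N) :
  \sum_(t : idx N k) X t = \sum_(s : idx N k | s j0 == p0) \sum_(p < N) X (upd s j0 p).
Proof.
rewrite exchange_big /= (partition_big (fun t : idx N k => t j0) predT) //=.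
apply: eq_bigr => p _.
rewrite (reindex_onto (fun s => upd s j0 p) (fun t => upd t j0 p0)) /=.
  apply: eq_bigl => s; rewrite upd_at eqxx /= updK.
  apply/eqP/eqP => [<-|<-]; first by rewrite upd_at.
  by rewrite upd_id.
by move=> t /eqP <-; rewrite updK upd_id.
Qed.


Variable k : nat.
Variable b : tens N k.+1 R^o.
Hypothesis balt : alternating b.

Lemma icons_swap (t : idx N k) j l p :
  [ffun x => icons l (upd t j p) (tperm ord0 (lift ord0 j) x)] = icons p (upd t j l).
Proof.
apply/ffunP => x; rewrite !ffunE.
case: (unliftP ord0 x) => [j'|] ->.
  have [->|nj] := eqVneq j' j.
    by rewrite tpermR /icons !ffunE ?unlift_none ?liftK ?eqxx ?upd_at.
  rewrite tpermD.
  - by rewrite liftK !ffunE (negbTE nj).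
  - by rewrite neq_lift.
  by rewrite (inj_eq (@lift_inj _ ord0)) eq_sym.
by rewrite tpermL liftK upd_at.
Qed.

Lemma contract0 (v : 'rV[R]_N) (t : idx N k) (j : 'I_k) :
  \sum_(p < N) v 0 p * dpart v b (upd t j p) = 0.
Proof.
pose S := \sum_(p < N) \sum_(l < N) v 0 p * v 0 l * b (icons l (upd t j p)).
have -> : \sum_(p < N) v 0 p * dpart v b (upd t j p) = S.
  by apply: eq_bigr => p _; rewrite /dpart mulr_sumr; apply: eq_bigr => l _; rewrite mulrA.
have eS : S = - S.
  rewrite {1}/S exchange_big /= -sumrN; apply: eq_bigr => l _.
  rewrite -sumrN; apply: eq_bigr => p _.
  have := balt (tperm ord0 (lift ord0 j)) (icons p (upd t j l)).
  rewrite icons_swap odd_tperm neq_lift expr1 => ->.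
  by rewrite mulrC [v 0 l * _]mulrC -mulrN scaleN1r mulrC.
have : S *+ 2 == 0 by rewrite mulr2n {1}eS addNr.
by rewrite mulrn_eq0 /= => /eqP.
Qed.


Lemma reflE (v : 'rV[R]_N) p q : refl v p q = (p == q)%:R - v 0 p * v 0 q.
Proof. by rewrite /refl !mxE big_ord1 !mxE. Qed.

Lemma tauk_refl_inv (v : 'rV[R]_N) (c : tens N k R^o) :
  (forall t j, \sum_(p < N) v 0 p * c (upd t j p) = 0) ->
  forall t, tauk (refl v) c t = c t.
Proof.
move=> hc t.
pose g n (j : 'I_k) p := if (j < n)%N then refl v p (t j) else (p == t j)%:R.
pose T n := \sum_(t' : idx N k) (\prod_(j < k) g n j (t' j)) * c t'.
have Tk : tauk (refl v) c t = T k.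
  by apply: eq_bigr => t' _; congr (_ * _); apply: eq_bigr => j _; rewrite /g ltn_ord.
have T0 : T 0%N = c t.
  rewrite /T (bigD1 t) //=.
  rewrite [X in X * _]big1 => [|j _]; last by rewrite /g /= eqxx.
  rewrite mul1r big1 ?addr0 // => t' nt. have [j nj] : exists j, t' j != t j.
    apply/existsP; apply: contraR nt => /existsPn h; apply/eqP/ffunP => j.
    by apply/eqP; move: (h j); rewrite negbK.
  by rewrite (bigD1 j) //= /g /= (negbTE nj) !mul0r.
have TS n : (n < k)%N -> T n.+1 = T n.
  move=> nk; pose j0 : 'I_k := Ordinal nk.
  pose K (s : idx N k) := \prod_(j < k | j != j0) g n j (s j).
  have KE s p : K (upd s j0 p) = K s.
    by apply: eq_bigr => j nj; rewrite ffunE (negbTE nj).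
  have hg (t' : idx N k) : \prod_(j < k) g n.+1 j (t' j) =
      \prod_(j < k) g n j (t' j) - v 0 (t' j0) * v 0 (t j0) * K t'.
    rewrite (bigD1 j0) //= [in RHS](bigD1 j0) //=.
    have -> : \prod_(j < k | j != j0) g n.+1 j (t' j) = K t'.
      apply: eq_bigr => j nj; rewrite /g ltnS leq_eqVlt.
      suff -> : (val j == n) = false by [].
      by apply/negbTE; move: nj; apply: contra => /eqP e; apply/eqP/val_inj.
    by rewrite /g /= ltnSn ltnn reflE mulrBl.
  rewrite /T (eq_bigr _ (fun t' _ => congr1 (fun x => x * c t') (hg t'))) /=.
  under eq_bigr do rewrite mulrBl.
  rewrite sumrB.
  suff -> : \sum_(t' : idx N k) v 0 (t' j0) * v 0 (t j0) * K t' * c t' = 0 by rewrite subr0.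
  rewrite (sum_reindex _ j0 (t j0)) big1 // => s _.
  transitivity (v 0 (t j0) * K s * \sum_(p < N) v 0 p * c (upd s j0 p)).
    rewrite mulr_sumr; apply: eq_bigr => p _; rewrite KE upd_at.
    by rewrite mulrCA !mulrA [v 0 p * _]mulrC.
  by rewrite hc mulr0.
rewrite Tk -T0.
have : (k <= k)%N by [].
elim: {-2}k => [|n IH] nk //.
by rewrite TS // IH // ltnW.
Qed.

End Tensor.
Section Poly.
Variables (R : realFieldType) (N : nat).

Lemma linp_neq0 (v : 'rV[R]_N) : v != 0 -> linp v != 0.
Proof.
move=> vn0; have [i vi] : exists i, v 0 i != 0.
  apply/existsP; apply: contraR vn0 => /existsPn h; apply/eqP/matrixP => a j.
  by rewrite ord1 mxE; move: (h j); rewrite negbK => /eqP.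
apply: contraNneq vi => L0.
have := congr1 (mcoeff U_(i)) L0; rewrite mcoeff0 /linp raddf_sum /=.
rewrite (bigD1 i) //= big1 => [|j nj]; first by rewrite mcoeffZ mcoeffXU eqxx mulr1 addr0 => ->.
by rewrite mcoeffZ mcoeffXU (negbTE nj) mulr0.
Qed.

Lemma xact_lin (w : 'M[R]_N) (cc : 'I_N -> R) :
  xact w (\sum_(j < N) cc j *: 'X_j) = \sum_(j < N) cc j *: \sum_(l < N) w l j *: 'X_l.
Proof.
rewrite /xact raddf_sum /=; apply: eq_bigr => j _.
by rewrite comp_mpolyZ comp_mpolyXU -tnth_nth tnth_mktuple.
Qed.


Lemma refl_col (v : 'rV[R]_N) j :
  \sum_(l < N) refl v l j *: ('X_l : Pol R N) = 'X_j - v 0 j *: linp v.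
Proof.
under eq_bigr do rewrite reflE scalerBl.
rewrite sumrB; congr (_ - _).
  rewrite (bigD1 j) //= eqxx scale1r big1 ?addr0 // => l nl.
  by rewrite (negbTE nl) scale0r.
rewrite /linp scaler_sumr; apply: eq_bigr => l _.
by rewrite scalerA mulrC.
Qed.

Lemma ddiff_lin (v : 'rV[R]_N) (cc : 'I_N -> R) : v != 0 ->
  ddiff v (\sum_(j < N) cc j *: 'X_j) = (\sum_(j < N) v 0 j * cc j)%:MP.
Proof.
move=> vn0.
set p := \sum_(j < N) cc j *: 'X_j; set d := \sum_(j < N) v 0 j * cc j.
have hd : d%:MP * linp v = p - xact (refl v) p.
  rewrite {2}/p xact_lin mul_mpolyC.
  under [X in _ = _ - X]eq_bigr do rewrite refl_col scalerBr scalerA.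
  rewrite sumrB /p opprB addrC subrK -scaler_suml /d.
  by congr (_ *: _); apply: eq_bigr => j _; rewrite mulrC.
have := epsilon_spec (inhabits 0) (fun q => q * linp v = p - xact (refl v) p) (ex_intro _ _ hd).
rewrite -/(ddiff v p) -hd => /mulIf; apply; exact: linp_neq0.
Qed.

End Poly.


Section MainSec.
Variables (R : realFieldType) (N : nat) (Rs Rp : seq 'rV[R]_N) (k : nat).
Variable b : tens N k.+1 R^o.
Hypothesis balt : alternating b.

Lemma dpart_delta i t : dpart (delta_mx 0 i) b t = b (icons i t).
Proof.
rewrite /dpart (bigD1 i) //= mxE !eqxx mul1r big1 ?addr0 // => j nj.
by rewrite mxE eqxx (negbTE nj) mul0r.
Qed.

Lemma dpartxE t : dpartx b t = \sum_(i < N) b (icons i t) *: 'X_i.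
Proof. by apply: eq_bigr => i _; rewrite dpart_delta. Qed.

Lemma dpartx_alt : alternating (dpartx b).
Proof.
move=> s t; rewrite !dpartxE scaler_sumr; apply: eq_bigr => i _.
have -> : icons i [ffun j => t (s j)] = [ffun x => icons i t (lift_perm ord0 ord0 s x)].
  apply/ffunP => x; rewrite !ffunE.
  case: (unliftP ord0 x) => [j|] ->.
    by rewrite lift_perm_lift /icons !ffunE !liftK.
  by rewrite lift_perm_id unlift_none.
have -> : b [ffun x => icons i t (lift_perm ord0 ord0 s x)] = (-1) ^+ s * b (icons i t).
  by rewrite balt odd_lift_perm.
by rewrite scalerA.
Qed.

Lemma dpartx_P1 t : P1 (dpartx b t).
Proof.
have : dpartx b t \in [in R[N], 1.-homog].
  rewrite dpartxE; apply: rpred_sum => i _; apply: rpredZ.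
  by rewrite dhomogX; apply/eqP; apply: mdeg1.
by [].
Qed.

Lemma mderiv_dpartx i t : mderiv i (dpartx b t) = (b (icons i t) : R)%:MP.
Proof.
rewrite dpartxE raddf_sum /= (bigD1 i) //= big1 ?addr0.
  rewrite mderivZ mderivX mnm1E eqxx scale1r.
  have -> : (U_(i) - U_(i))%MM = 0%MM by rewrite -{1}(add0m U_(i)%MM) addmK.
  by rewrite mpolyX0 -mul_mpolyC mulr1.
move=> j nj; rewrite mderivZ mderivX mnm1E (negbTE nj) scale0r scaler0 //.
Qed.


Lemma mpolyC_scale (x y : R) : (x * y)%:MP = x *: (y%:MP : Pol R N).
Proof. by rewrite mpolyCM mul_mpolyC. Qed.

Lemma mpolyC_scale' (x : R) (y : R^o) : (x *: y)%:MP = x *: ((y : R)%:MP : Pol R N).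
Proof. exact: mpolyC_scale. Qed.

Lemma Dunkl_E kappa i t : (forall v, v \in Rp -> v != 0) ->
  Dunkl Rp kappa i (dpartx b) t =
    ((b (icons i t) : R) + kappa * \sum_(v <- Rp) v 0 i * dpart v b t)%:MP.
Proof.
move=> nz; rewrite /Dunkl mderiv_dpartx mpolyCD; congr (_ + _).
rewrite mpolyCM mul_mpolyC; congr (_ *: _).
rewrite raddf_sum /= big_seq [RHS]big_seq; apply: eq_bigr => v vR.
rewrite -(tauk_refl_inv (contract0 balt v) t). rewrite mpolyC_scale; congr (_ *: _).
rewrite /tauk raddf_sum; apply: eq_bigr => t' _.
rewrite dpartxE ddiff_lin ?nz //; exact: esym (mpolyC_scale' _ _).
Qed.

End MainSec.

Lemma sumE (R : realFieldType) (N : nat) (Rs Rp : seq 'rV[R]_N) (k : nat)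
  (b : tens N k.+1 R^o) :
  root_system Rs -> positive_roots Rs Rp -> one_refl_class Rs -> (0 < N)%N ->
  forall i t, \sum_(v <- Rp) v 0 i * dpart v b t = gamma Rp * b (icons i t).
Proof.
move=> hRs hRp hW N0 i t; have hM := M_gamma hRs hRp hW N0.
transitivity (\sum_(l < N) (\sum_(v <- Rp) v 0 i * v 0 l) * b (icons l t)).
  rewrite /dpart; under eq_bigr do rewrite mulr_sumr.
  rewrite exchange_big /=; apply: eq_bigr => l _; rewrite mulr_suml.
  by apply: eq_bigr => v _; rewrite mulrA.
have e l : \sum_(v <- Rp) v 0 i * v 0 l = (gamma Rp)%:M i l.
  rewrite -hM summxE; apply: eq_bigr => v _; by rewrite !mxE big_ord1 !mxE.
under eq_bigr do rewrite e mxE.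
rewrite (bigD1 i) //= eqxx mulr1n big1 ?addr0 // => l nl.
by rewrite eq_sym (negbTE nl) mulr0n mul0r.
Qed.

Lemma gamma_neq0 (R : realFieldType) (N : nat) (Rs Rp : seq 'rV[R]_N) :
  root_system Rs -> positive_roots Rs Rp -> (0 < N)%N -> gamma Rp != 0.
Proof.
move=> hRs hRp N0.
have [v vR] : exists v, v \in Rs.
  case E: Rs => [|v rs]; last by exists v; rewrite inE eqxx.
  case: hRs => _ _ _ _; rewrite E big_nil submx0 => /eqP /matrixP /(_ (Ordinal N0) (Ordinal N0)).
  by rewrite !mxE eqxx => /eqP; rewrite oner_eq0.
have [w wRp] : exists w, w \in Rp.
  case: hRp => _ [u0 [nz hp]].
  have := nz v vR; rewrite neq_lt => /orP[lt|gt].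
    exists (- v); rewrite hp neg_root // dotvNl oppr_gt0 //.
  by exists v; rewrite hp vR.
rewrite /gamma mulf_neq0 // ?invr_eq0 pnatr_eq0 -?lt0n //.
rewrite muln_gt0 /=; case: Rp wRp {hRp} => //.
Qed.

Theorem theorem3p6 (R : realFieldType) (N : nat) (Rs Rp : seq 'rV[R]_N)
    (kappa : R) (k : nat) (a : 'rV[R]_N) (b : tens N k.+1 R^o) :
  root_system Rs -> positive_roots Rs Rp -> one_refl_class Rs ->
  (k.+1 <= N)%N ->
  alternating b ->
  [/\ alternating (dpartx b) /\ (forall t, P1 (dpartx b t)),
      (forall t, \sum_(i < N) a 0 i *: Dunkl Rp kappa i (dpartx b) t
                 = ((1 + gamma Rp * kappa) * dpart a b t)%:MP) &
      (kappa = - 1 / gamma Rp ->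
         forall (i : 'I_N) t, Dunkl Rp kappa i (dpartx b) t = 0)].
Proof.
move=> hRs hRp hW kN balt.
have N0 : (0 < N)%N by apply: leq_trans kN.
have nz v : v \in Rp -> v != 0.
  case: hRp => _ [u0 [_ hp]]; rewrite hp => /andP[vR _].
  exact: dotv_neq0 (root_norm hRs vR).
have DE i t : Dunkl Rp kappa i (dpartx b) t = ((1 + gamma Rp * kappa) * b (icons i t))%:MP.
  rewrite Dunkl_E // (sumE b hRs hRp hW N0); congr (_%:MP).
  by rewrite mulrDl mul1r mulrA [kappa * _]mulrC.
split.
- by split; [exact: dpartx_alt | exact: dpartx_P1].
- move=> t; under eq_bigr do rewrite DE.
  rewrite /dpart mulr_sumr raddf_sum; apply: eq_bigr => i _.
  by rewrite mulrCA -mpolyC_scale.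
move=> hk i t; rewrite DE hk.
have g0 := gamma_neq0 hRs hRp N0.
by rewrite mulrCA mulN1r mulfV // subrr mul0r raddf0.
Qed.
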